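(* Let $(M,d)$ be a bounded uniformly discrete pointed metric space and let $x,y\in M$, $x\neq y$. Then the molecule $m_{xy}$ is an extreme point of $B_{\mathcal F(M)}$ if and only if $[x,y]=\{x,y\}$.
   Context: A pointed metric space $M$ has a distinguished origin $0$; it is uniformly discrete if $\inf\{d(u,v):u\neq v\}>0$. $\mathrm{Lip}_0(M)$ is the Banach space of real Lipschitz functions on $M$ vanishing at $0$ with the best Lipschitz constant as norm; $\delta(x)$ is evaluation at $x$, and the Lipschitz free space $\mathcal F(M)$ is the closed linear span of $\delta(M)$ in $\mathrm{Lip}_0(M)^*$. The molecule is $m_{xy}=(\delta(x)-\delta(y))/d(x,y)$. The metric segment is $[x,y]=\{z\in M: d(x,z)+d(z,y)=d(x,y)\}$. *)

(* Defs.v *)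
From Stdlib Require Import Reals Lra List.
Open Scope R_scope.

Record MetricSpace := {
  carrier :> Type;
  dist : carrier -> carrier -> R;
  dist_eq0 : forall x y, dist x y = 0 <-> x = y;
  dist_sym : forall x y, dist x y = dist y x;
  dist_tri : forall x y z, dist x z <= dist x y + dist y z
}.

Arguments dist {_} _ _.

Definition bounded_metric (M : MetricSpace) : Prop :=
  exists B : R, forall u v : M, dist u v <= B.

Definition uniformly_discrete (M : MetricSpace) : Prop :=
  exists e : R, 0 < e /\ forall u v : M, u <> v -> e <= dist u v.

Definition lip_le {M : MetricSpace} (L : R) (f : M -> R) : Prop :=
  forall u v : M, Rabs (f u - f v) <= L * dist u v.

Definition Lip0 {M : MetricSpace} (o : M) (f : M -> R) : Prop :=
  f o = 0 /\ exists L, lip_le L f.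

(** Functionals on Lip_0(M); two functionals are identified when they
    agree on Lip_0(M). *)
Definition functional (M : MetricSpace) := (M -> R) -> R.

Definition feq {M : MetricSpace} (o : M) (phi psi : functional M) : Prop :=
  forall f, Lip0 o f -> phi f = psi f.

Definition dnorm_le {M : MetricSpace} (o : M) (phi : functional M) (r : R) : Prop :=
  forall f, Lip0 o f -> lip_le 1 f -> Rabs (phi f) <= r.

Definition in_dual {M : MetricSpace} (o : M) (phi : functional M) : Prop :=
  (forall f g, Lip0 o f -> Lip0 o g -> phi (fun u => f u + g u) = phi f + phi g) /\
  (forall (c : R) f, Lip0 o f -> phi (fun u => c * f u) = c * phi f) /\
  (exists C, dnorm_le o phi C).

Definition fsub {M : MetricSpace} (phi psi : functional M) : functional M :=
  fun f => phi f - psi f.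

Definition fcomb {M : MetricSpace} (t : R) (phi psi : functional M) : functional M :=
  fun f => t * phi f + (1 - t) * psi f.

Definition delta {M : MetricSpace} (x : M) : functional M := fun f => f x.

Definition lincomb_delta {M : MetricSpace} (l : list (R * M)) : functional M :=
  fun f => fold_right (fun p acc => fst p * f (snd p) + acc) 0 l.

Definition in_span_delta {M : MetricSpace} (o : M) (phi : functional M) : Prop :=
  exists l : list (R * M), feq o phi (lincomb_delta l).

(** Lipschitz free space F(M): closed linear span of delta(M) in Lip_0(M)^* *)
Definition in_free {M : MetricSpace} (o : M) (phi : functional M) : Prop :=
  in_dual o phi /\
  forall eps, 0 < eps ->
    exists psi, in_span_delta o psi /\ dnorm_le o (fsub phi psi) eps.

Definition in_ball_free {M : MetricSpace} (o : M) (phi : functional M) : Prop :=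
  in_free o phi /\ dnorm_le o phi 1.

Definition extreme_ball_free {M : MetricSpace} (o : M) (mu : functional M) : Prop :=
  in_ball_free o mu /\
  forall (a b : functional M) (t : R),
    in_ball_free o a -> in_ball_free o b -> 0 < t < 1 ->
    feq o mu (fcomb t a b) -> feq o a b.

Definition molecule {M : MetricSpace} (x y : M) : functional M :=
  fun f => (f x - f y) / dist x y.

Definition segment {M : MetricSpace} (x y : M) : M -> Prop :=
  fun z => dist x z + dist z y = dist x y.

(* Main.v *)
Require Import Defs.
From Stdlib Require Import Reals Lra List Classical ClassicalEpsilon FunctionalExtensionality.
Import Defs.
Open Scope R_scope.

Lemma absinv (a b : R) : Rabs a <= b -> -b <= a <= b.
Proof. intros H. pose proof (Rle_abs a). pose proof (Rle_abs (-a)).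
  rewrite Rabs_Ropp in H1. lra. Qed.

Lemma dist_self (M : MetricSpace) (u : M) : dist u u = 0.
Proof. apply (proj2 (dist_eq0 M u u)); reflexivity. Qed.

Lemma dist_nonneg (M : MetricSpace) (u v : M) : 0 <= dist u v.
Proof. pose proof (dist_tri M u v u). rewrite dist_self, (dist_sym M v u) in H. lra. Qed.

Lemma dist_pos (M : MetricSpace) (u v : M) : u <> v -> 0 < dist u v.
Proof. intros H. destruct (dist_nonneg M u v) as [h|h]; auto.
  exfalso; apply H. apply (dist_eq0 M). auto. Qed.

Lemma dist_lip (M : MetricSpace) (u v z : M) : Rabs (dist u z - dist v z) <= dist u v.
Proof. pose proof (dist_tri M u v z). pose proof (dist_tri M v u z).
  rewrite (dist_sym M v u) in H0. apply Rabs_le. lra. Qed.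

Lemma Rmax_lip (a b a' b' K : R) : Rabs (a - a') <= K -> Rabs (b - b') <= K ->
  Rabs (Rmax a b - Rmax a' b') <= K.
Proof. intros H1 H2. apply absinv in H1. apply absinv in H2.
  unfold Rmax. repeat destruct Rle_dec; apply Rabs_le; lra. Qed.

Lemma bdd_lip (M : MetricSpace) e (He : 0 < e)
  (Hud : forall u v : M, u <> v -> e <= dist u v) (h : M -> R) C :
  (forall u, Rabs (h u) <= C) -> lip_le (2 * C / e) h.
Proof.
  intros HC u v. destruct (classic (u = v)) as [->|Hne].
  - rewrite dist_self. replace (h v - h v) with 0 by ring. rewrite Rabs_R0. lra.
  - pose proof (Hud u v Hne). pose proof (HC u) as Hu. pose proof (HC v) as Hv.
    assert (0 <= C) by (pose proof (Rabs_pos (h u)); lra).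
    apply absinv in Hu. apply absinv in Hv.
    assert (Rabs (h u - h v) <= 2 * C) by (apply Rabs_le; lra).
    assert (2*C/e * e = 2*C) by (field; lra).
    assert (0 <= 2*C/e) by (unfold Rdiv; apply Rmult_le_pos; [lra | left; apply Rinv_0_lt_compat; lra]).
    assert (2*C/e * e <= 2*C/e * dist u v) by (apply Rmult_le_compat_l; lra).
    lra.
Qed.

Lemma Lip0_of_bdd (M : MetricSpace) (o : M) e (He : 0 < e)
  (Hud : forall u v : M, u <> v -> e <= dist u v) (h : M -> R) :
  h o = 0 -> (exists C, forall u, Rabs (h u) <= C) -> Lip0 o h.
Proof. intros H0 [C HC]. split; auto. exists (2 * C / e). apply (bdd_lip M e); auto. Qed.

Lemma bdd_of_Lip0 (M : MetricSpace) (o : M) B (HB : forall u v : M, dist u v <= B) (h : M -> R) :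
  Lip0 o h -> exists C, forall u, Rabs (h u) <= C.
Proof.
  intros [H0 [L HL]]. exists (Rabs L * B). intros u.
  specialize (HL u o). rewrite H0, Rminus_0_r in HL.
  pose proof (dist_nonneg M u o). pose proof (HB u o).
  assert (L * dist u o <= Rabs L * dist u o) by (apply Rmult_le_compat_r; [lra| apply Rle_abs]).
  assert (Rabs L * dist u o <= Rabs L * B) by (apply Rmult_le_compat_l; [apply Rabs_pos| lra]).
  lra.
Qed.

Lemma Lip0_lin2 (M : MetricSpace) (o : M) f g c1 c2 :
  Lip0 o f -> Lip0 o g -> Lip0 o (fun u => c1 * f u + c2 * g u).
Proof.
  intros [Hf0 [L1 H1]] [Hg0 [L2 H2]]. split.
  - rewrite Hf0, Hg0. ring.
  - exists (Rabs c1 * L1 + Rabs c2 * L2). intros u v.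
    replace (c1 * f u + c2 * g u - (c1 * f v + c2 * g v)) with (c1 * (f u - f v) + c2 * (g u - g v)) by ring.
    eapply Rle_trans. apply Rabs_triang. rewrite !Rabs_mult.
    specialize (H1 u v). specialize (H2 u v).
    assert (Rabs c1 * Rabs (f u - f v) <= Rabs c1 * (L1 * dist u v)) by (apply Rmult_le_compat_l; [apply Rabs_pos|lra]).
    assert (Rabs c2 * Rabs (g u - g v) <= Rabs c2 * (L2 * dist u v)) by (apply Rmult_le_compat_l; [apply Rabs_pos|lra]).
    lra.
Qed.

Lemma lin2 (M : MetricSpace) (o : M) a f g c1 c2 :
  in_dual o a -> Lip0 o f -> Lip0 o g -> a (fun u => c1 * f u + c2 * g u) = c1 * a f + c2 * a g.
Proof.
  intros [Hadd [Hsc _]] Hf Hg.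
  assert (Hf' : Lip0 o (fun u => c1 * f u)).
  { replace (fun u => c1 * f u) with (fun u => c1 * f u + 0 * f u)
      by (apply functional_extensionality; intros; ring). apply Lip0_lin2; auto. }
  assert (Hg' : Lip0 o (fun u => c2 * g u)).
  { replace (fun u => c2 * g u) with (fun u => c2 * g u + 0 * g u)
      by (apply functional_extensionality; intros; ring). apply Lip0_lin2; auto. }
  pose proof (Hadd _ _ Hf' Hg') as E. cbv beta in E. rewrite E.
  rewrite (Hsc c1 f Hf), (Hsc c2 g Hg). reflexivity.
Qed.

Lemma lc_cons (M : MetricSpace) (q : R * M) l f :
  lincomb_delta (q :: l) f = fst q * f (snd q) + lincomb_delta l f.
Proof. reflexivity. Qed.

Lemma lincomb_scale (M : MetricSpace) (l : list (R * M)) c f :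
  lincomb_delta l (fun u => c * f u) = c * lincomb_delta l f.
Proof. induction l as [|q l IH]. - unfold lincomb_delta; simpl; ring.
  - rewrite !lc_cons, IH. ring. Qed.

Lemma lincomb_zero (M : MetricSpace) (l : list (R * M)) f :
  (forall p, In p (map snd l) -> f p = 0) -> lincomb_delta l f = 0.
Proof. induction l as [|q l IH]; intros H. - reflexivity.
  - rewrite lc_cons, IH. rewrite (H (snd q)) by (simpl; auto). ring.
    intros p Hp. apply H. simpl; auto. Qed.

Lemma approx_bound (M : MetricSpace) (o : M) a psi l eps f K :
  in_dual o a -> dnorm_le o (fsub a psi) eps -> feq o psi (lincomb_delta l) ->
  Lip0 o f -> lip_le K f -> 0 < K -> Rabs (a f - lincomb_delta l f) <= eps * K.
Proof.
  intros Hd Hn Hf Hl Hk HK.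
  assert (HiK : 0 < / K) by (apply Rinv_0_lt_compat; lra).
  set (g := fun u => / K * f u).
  assert (Hg0 : Lip0 o g).
  { unfold g. replace (fun u => / K * f u) with (fun u => /K * f u + 0 * f u)
      by (apply functional_extensionality; intros; ring). apply Lip0_lin2; auto. }
  assert (Hg1 : lip_le 1 g).
  { intros u v. unfold g. replace (/K * f u - /K * f v) with (/K * (f u - f v)) by ring.
    rewrite Rabs_mult, (Rabs_pos_eq (/K)) by lra.
    specialize (Hk u v).
    apply Rmult_le_reg_l with K; auto.
    replace (K * (/ K * Rabs (f u - f v))) with (Rabs (f u - f v)) by (field; lra). lra. }
  pose proof (Hn g Hg0 Hg1) as H. unfold fsub in H.
  rewrite (Hf g Hg0) in H. unfold g in H. rewrite lincomb_scale in H.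
  destruct Hd as [_ [Hsc _]]. rewrite (Hsc (/K) f Hl) in H.
  replace (/K * a f - /K * lincomb_delta l f) with (/K * (a f - lincomb_delta l f)) in H by ring.
  rewrite Rabs_mult, (Rabs_pos_eq (/K)) in H by lra.
  apply Rmult_le_reg_l with (/K); auto.
  replace (/K * (eps*K)) with eps by (field; lra). exact H.
Qed.

Definition ind {M : MetricSpace} (p : M) : M -> R :=
  fun u => if excluded_middle_informative (u = p) then 1 else 0.

Lemma ind_neq (M : MetricSpace) (p u : M) : u <> p -> ind p u = 0.
Proof. intros H. unfold ind. destruct excluded_middle_informative; congruence. Qed.

Lemma molecule_ball (M : MetricSpace) (o u v : M) : u <> v -> in_ball_free o (molecule u v).
Proof.
  intros Huv. pose proof (dist_pos M u v Huv) as Hd.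
  assert (Hb : dnorm_le o (molecule u v) 1).
  { intros f _ Hf1. unfold molecule. unfold Rdiv.
    rewrite Rabs_mult, (Rabs_pos_eq (/ dist u v)) by (left; apply Rinv_0_lt_compat; lra).
    apply Rmult_le_reg_r with (dist u v); auto.
    rewrite Rmult_assoc, Rinv_l by lra. specialize (Hf1 u v). lra. }
  split; [split|]; auto.
  - split; [|split].
    + intros f g _ _. unfold molecule. field. lra.
    + intros c f _. unfold molecule. field. lra.
    + exists 1; auto.
  - intros eps Heps. exists (molecule u v). split.
    + exists ((1 / dist u v, u) :: (-1 / dist u v, v) :: nil).
      intros f _. unfold molecule, lincomb_delta. simpl. field. lra.
    + intros f _ _. unfold fsub. replace (molecule u v f - molecule u v f) with 0 by ring.
      rewrite Rabs_R0. lra.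
Qed.

Lemma solve2 (gx gy Dd A Bo : R) : 0 < Dd ->
  (A = 0 /\ Bo = Dd /\ gx = 0) \/ (Bo = 0 /\ A = Dd /\ gy = 0) \/ (A + Bo - Dd <> 0) ->
  exists lam mu, gx = lam * (Dd - Bo) + mu * A /\ gy = lam * (- Bo) + mu * (A - Dd).
Proof.
  intros HD [[-> [-> ->]]|[[-> [-> ->]]|Hs]].
  - exists (- gy / Dd), 0. split; field; lra.
  - exists (gx / Dd), 0. split; field; lra.
  - exists ((gx*(A - Dd) - A*gy)/(Dd*(A + Bo - Dd))), (((Dd - Bo)*gy + Bo*gx)/(Dd*(A + Bo - Dd))).
    split; field; split; lra.
Qed.

Lemma key (M : MetricSpace) (o x y : M) e a b t :
  0 < e -> (forall u v : M, u <> v -> e <= dist u v) ->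
  (exists B, forall u v : M, dist u v <= B) -> x <> y ->
  (forall z, segment x y z -> z = x \/ z = y) ->
  in_ball_free o a -> in_ball_free o b -> 0 < t < 1 -> feq o (molecule x y) (fcomb t a b) ->
  forall g, Lip0 o g -> a g = molecule x y g.
Proof.
  intros He Hud [B HB] Hxy Hseg Ha Hb Ht Hm.
  pose proof (dist_pos M x y Hxy) as HD.
  destruct Ha as [[Hda Hfa] Hna].
  assert (Hnorm : forall f, Lip0 o f -> lip_le 1 f -> f x - f y = dist x y -> a f = 1).
  { intros f Hf0 Hf1 Hfd. pose proof (Hm f Hf0) as E. unfold molecule, fcomb in E.
    rewrite Hfd in E. replace (dist x y / dist x y) with 1 in E by (field; lra).
    pose proof (Hna f Hf0 Hf1) as H1. destruct Hb as [_ Hnb]. pose proof (Hnb f Hf0 Hf1) as H2.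
    apply absinv in H1; apply absinv in H2.
    assert (t * (1 - a f) >= 0) by nra.
    assert ((1 - t) * (1 - b f) >= 0) by nra.
    assert (t * (1 - a f) = 0) by lra.
    apply Rmult_integral in H3. lra. }
  assert (LB : forall h, h o = 0 -> (exists C, forall u, Rabs (h u) <= C) -> Lip0 o h).
  { intros h; apply (Lip0_of_bdd M o e); auto. }
  assert (Hind : forall p, p <> x -> p <> y -> p <> o -> a (ind p) = 0).
  { intros p Hpx Hpy Hpo.
    assert (Hs : 0 < dist x p + dist p y - dist x y).
    { pose proof (dist_tri M x p y).
      destruct (Rle_lt_or_eq_dec 0 (dist x p + dist p y - dist x y)) as [H'|H']; [lra|auto|].
      exfalso. destruct (Hseg p) as [->| ->]; [unfold segment; lra| congruence | congruence]. }
    assert (Hdl : exists dl, 0 < dl /\ dl <= e /\ dl <= dist x p + dist p y - dist x y).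
    { exists (Rmin e (dist x p + dist p y - dist x y)). split; [apply Rmin_glb_lt; lra|].
      split; [apply Rmin_l | apply Rmin_r]. }
    destruct Hdl as [dl [Hdl0 [Hdle Hdls]]].
    pose proof (Hud x p (fun E => Hpx (eq_sym E))) as Hexp.
    set (G := fun u => Rmax (dist x y - dist u x) (dist x y - dist x p + dl - dist u p)).
    assert (HG1 : lip_le 1 G).
    { intros u v. unfold G. rewrite Rmult_1_l. apply Rmax_lip.
      - replace (dist x y - dist u x - (dist x y - dist v x)) with (-(dist u x - dist v x)) by ring.
        rewrite Rabs_Ropp. apply dist_lip.
      - replace (dist x y - dist x p + dl - dist u p - (dist x y - dist x p + dl - dist v p))
          with (-(dist u p - dist v p)) by ring.
        rewrite Rabs_Ropp. apply dist_lip. }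
    assert (HGx : G x = dist x y).
    { unfold G. rewrite dist_self. rewrite Rmax_left; lra. }
    assert (HGy : G y = 0).
    { unfold G. rewrite (dist_sym M y x), (dist_sym M y p). rewrite Rmax_left; lra. }
    assert (HGp : forall v, v <> p -> Rabs (G p - G v - dl) <= dist p v).
    { intros v Hv. pose proof (Hud v p Hv) as Hvp.
      assert (G p >= dist x y - dist x p + dl).
      { unfold G. rewrite dist_self. pose proof (Rmax_r (dist x y - dist p x) (dist x y - dist x p + dl - 0)). lra. }
      assert (G v <= dist x y - dist x p + dist p v).
      { unfold G. apply Rmax_lub.
        - pose proof (dist_tri M x v p). rewrite (dist_sym M x v), (dist_sym M v p) in H0. lra.
        - rewrite (dist_sym M v p) in Hvp. rewrite (dist_sym M v p). lra. }
      pose proof (HG1 p v) as H1. apply absinv in H1. apply Rabs_le. lra. }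
    set (F := fun u => G u - G o - dl * ind p u).
    set (Gt := fun u => G u - G o).
    assert (HF1 : lip_le 1 F).
    { intros u v. unfold F, ind.
      destruct (excluded_middle_informative (u = p)) as [Eu|Nu];
      destruct (excluded_middle_informative (v = p)) as [Ev|Nv].
      - subst. rewrite dist_self. replace (G p - G o - dl * 1 - (G p - G o - dl * 1)) with 0 by ring.
        rewrite Rabs_R0. lra.
      - subst. replace (G p - G o - dl * 1 - (G v - G o - dl * 0)) with (G p - G v - dl) by ring.
        rewrite Rmult_1_l. apply HGp; auto.
      - subst. replace (G u - G o - dl * 0 - (G p - G o - dl * 1)) with (- (G p - G u - dl)) by ring.
        rewrite Rabs_Ropp, (dist_sym M u p), Rmult_1_l. apply HGp; auto.
      - replace (G u - G o - dl * 0 - (G v - G o - dl * 0)) with (G u - G v) by ring. apply HG1. }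
    assert (HGt1 : lip_le 1 Gt).
    { intros u v. unfold Gt. replace (G u - G o - (G v - G o)) with (G u - G v) by ring. apply HG1. }
    assert (HF0 : Lip0 o F).
    { split. - unfold F. rewrite ind_neq by auto. ring. - exists 1; auto. }
    assert (HGt0 : Lip0 o Gt).
    { split. - unfold Gt. ring. - exists 1; auto. }
    assert (Hi0 : Lip0 o (ind p)).
    { apply LB. - apply ind_neq; auto. - exists 1. intros u. unfold ind.
      destruct excluded_middle_informative; rewrite ?Rabs_R1, ?Rabs_R0; lra. }
    assert (EF : a F = 1).
    { apply Hnorm; auto. unfold F. rewrite !ind_neq by auto. lra. }
    assert (EG : a Gt = 1).
    { apply Hnorm; auto. unfold Gt. lra. }
    assert (EGF : Gt = fun u => 1 * F u + dl * ind p u).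
    { apply functional_extensionality. intros u. unfold Gt, F. ring. }
    rewrite EGF, (lin2 M o a F (ind p) 1 dl) in EG by auto.
    apply Rmult_eq_reg_l with dl; lra. }
  assert (Hkp : forall k p, Lip0 o k -> k x = 0 -> k y = 0 -> a (fun u => k u * ind p u) = 0).
  { intros k p Hk Hkx Hky. pose proof (proj1 Hk) as Hko.
    destruct (classic (p = x \/ p = y \/ p = o)) as [Hp|Hp].
    - replace (fun u => k u * ind p u) with (fun u : M => 0 * k u + 0 * k u).
      + rewrite (lin2 M o a k k 0 0) by auto. ring.
      + apply functional_extensionality. intros u. unfold ind.
        destruct excluded_middle_informative as [E|E]; [|ring].
        subst u. destruct Hp as [->|[->| ->]]; rewrite ?Hkx, ?Hky, ?Hko; ring.
    - replace (fun u => k u * ind p u) with (fun u : M => k p * ind p u + 0 * ind p u).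
      + rewrite (lin2 M o a (ind p) (ind p) (k p) 0).
        * rewrite Hind; [ring| | |]; intros E; apply Hp; auto.
        * auto.
        * apply LB. apply ind_neq; intros E; apply Hp; auto. exists 1. intros u. unfold ind.
          destruct excluded_middle_informative; rewrite ?Rabs_R1, ?Rabs_R0; lra.
        * apply LB. apply ind_neq; intros E; apply Hp; auto. exists 1. intros u. unfold ind.
          destruct excluded_middle_informative; rewrite ?Rabs_R1, ?Rabs_R0; lra.
      + apply functional_extensionality. intros u. unfold ind.
        destruct excluded_middle_informative as [E|E]; [subst; ring|ring]. }

  assert (Hkl : forall S k, Lip0 o k -> k x = 0 -> k y = 0 ->
    a (fun u => if excluded_middle_informative (In u S) then k u else 0) = 0).
  { induction S as [|p S IH]; intros k Hk Hkx Hky.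
    - replace (fun u => if excluded_middle_informative (In u nil) then k u else 0)
        with (fun u : M => 0 * k u + 0 * k u).
      + rewrite (lin2 M o a k k 0 0) by auto. ring.
      + apply functional_extensionality. intros u.
        destruct excluded_middle_informative as [E|E]; [destruct E|ring].
    - pose proof (proj1 Hk) as Hko.
      destruct (bdd_of_Lip0 M o B HB k Hk) as [C HC].
      assert (HC0 : 0 <= C) by (pose proof (HC o); pose proof (Rabs_pos (k o)); lra).
      set (k' := fun u => if excluded_middle_informative (u = p) then 0 else k u).
      assert (Hk' : Lip0 o k').
      { apply LB. - unfold k'. destruct excluded_middle_informative; auto.
        - exists C. intros u. unfold k'. destruct excluded_middle_informative; auto.
          rewrite Rabs_R0; auto. }
      assert (Hk'x : k' x = 0) by (unfold k'; destruct excluded_middle_informative; auto).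
      assert (Hk'y : k' y = 0) by (unfold k'; destruct excluded_middle_informative; auto).
      assert (Hf1 : Lip0 o (fun u => k u * ind p u)).
      { apply LB. - rewrite Hko. ring.
        - exists C. intros u. unfold ind. destruct excluded_middle_informative;
          [rewrite Rmult_1_r; auto | rewrite Rmult_0_r, Rabs_R0; auto]. }
      assert (Hf2 : Lip0 o (fun u => if excluded_middle_informative (In u S) then k' u else 0)).
      { apply LB. - destruct excluded_middle_informative; auto. exact (proj1 Hk').
        - exists C. intros u. destruct excluded_middle_informative; [|rewrite Rabs_R0; auto].
          unfold k'. destruct excluded_middle_informative; auto. rewrite Rabs_R0; auto. }
      replace (fun u => if excluded_middle_informative (In u (p :: S)) then k u else 0)
        with (fun u => 1 * (fun u => k u * ind p u) u
                     + 1 * (fun u => if excluded_middle_informative (In u S) then k' u else 0) u).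
      + rewrite (lin2 M o a _ _ 1 1 Hda Hf1 Hf2).
        rewrite Hkp, IH; auto. ring.
      + apply functional_extensionality. intros u. cbv beta. unfold k', ind.
        destruct (excluded_middle_informative (u = p)) as [Eup|Nup];
        destruct (excluded_middle_informative (In u (p :: S))) as [I1|N1];
        destruct (excluded_middle_informative (In u S)) as [I2|N2]; simpl In in *;
        try ring.
        * exfalso; apply N1; left; auto.
        * exfalso; apply N1; left; auto.
        * exfalso; destruct I1 as [E|E]; [apply Nup; auto| apply N2; auto].
        * exfalso; apply N1; right; auto. }
  assert (Hvan : forall k, Lip0 o k -> k x = 0 -> k y = 0 -> a k = 0).
  { intros k Hk Hkx Hky. pose proof (proj1 Hk) as Hko.
    destruct (bdd_of_Lip0 M o B HB k Hk) as [C HC].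
    assert (HC0 : 0 <= C) by (pose proof (HC o); pose proof (Rabs_pos (k o)); lra).
    assert (HK : 0 < 2 * C / e + 1).
    { assert (0 <= 2*C/e) by (unfold Rdiv; apply Rmult_le_pos; [lra | left; apply Rinv_0_lt_compat; lra]). lra. }
    assert (Hbound : forall eps, 0 < eps -> Rabs (a k) <= eps * (2 * C / e + 1)).
    { intros eps Heps. destruct (Hfa eps Heps) as [psi [[l Hl] Hpsi]].
      set (S := map snd l).
      set (k2 := fun u => if excluded_middle_informative (In u S) then 0 else k u).
      assert (Hk2 : Lip0 o k2).
      { apply LB. - unfold k2. destruct excluded_middle_informative; auto.
        - exists C. intros u. unfold k2. destruct excluded_middle_informative; auto.
          rewrite Rabs_R0; auto. }
      assert (Hk1 : Lip0 o (fun u => if excluded_middle_informative (In u S) then k u else 0)).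
      { apply LB. - destruct excluded_middle_informative; auto.
        - exists C. intros u. destruct excluded_middle_informative; auto.
          rewrite Rabs_R0; auto. }
      assert (Ek : k = fun u => 1 * (fun u => if excluded_middle_informative (In u S) then k u else 0) u + 1 * k2 u).
      { apply functional_extensionality. intros u. cbv beta. unfold k2.
        destruct excluded_middle_informative; ring. }
      assert (Eak : a k = a k2).
      { rewrite Ek at 1. rewrite (lin2 M o a _ _ 1 1 Hda Hk1 Hk2). rewrite Hkl; auto. ring. }
      assert (Hk2l : lip_le (2 * C / e + 1) k2).
      { intros u v. pose proof (bdd_lip M e He Hud k2 C) as HL.
        assert (HC2 : forall u, Rabs (k2 u) <= C).
        { intros w. unfold k2. destruct excluded_middle_informative; auto. rewrite Rabs_R0; auto. }
        specialize (HL HC2 u v). pose proof (dist_nonneg M u v). nra. }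
      pose proof (approx_bound M o a psi l eps k2 _ Hda Hpsi Hl Hk2 Hk2l HK) as HA.
      rewrite (lincomb_zero M l k2), Rminus_0_r in HA.
      - rewrite Eak. exact HA.
      - intros q Hq. unfold k2. destruct excluded_middle_informative; auto. contradiction. }
    destruct (Req_dec (a k) 0) as [E|E]; auto. exfalso.
    pose proof (Rabs_pos_lt _ E) as Hp.
    assert (Heps : 0 < Rabs (a k) / (2 * (2 * C / e + 1))).
    { apply Rdiv_lt_0_compat; lra. }
    pose proof (Hbound _ Heps) as H1.
    replace (Rabs (a k) / (2 * (2 * C / e + 1)) * (2 * C / e + 1)) with (Rabs (a k) / 2) in H1
      by (field; lra). lra. }
  intros g Hg.
  set (N1 := fun u => dist u y - dist o y).
  set (N2 := fun u => dist o x - dist u x).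
  assert (HN1 : Lip0 o N1).
  { split. - unfold N1. ring. - exists 1. intros u v. unfold N1. rewrite Rmult_1_l.
    replace (dist u y - dist o y - (dist v y - dist o y)) with (dist u y - dist v y) by ring.
    apply dist_lip. }
  assert (HN2 : Lip0 o N2).
  { split. - unfold N2. ring. - exists 1. intros u v. unfold N2. rewrite Rmult_1_l.
    replace (dist o x - dist u x - (dist o x - dist v x)) with (- (dist u x - dist v x)) by ring.
    rewrite Rabs_Ropp. apply dist_lip. }
  assert (EN1 : a N1 = 1).
  { apply Hnorm; auto.
    - intros u v. unfold N1. rewrite Rmult_1_l.
      replace (dist u y - dist o y - (dist v y - dist o y)) with (dist u y - dist v y) by ring.
      apply dist_lip.
    - unfold N1. rewrite dist_self. ring. }
  assert (EN2 : a N2 = 1).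
  { apply Hnorm; auto.
    - intros u v. unfold N2. rewrite Rmult_1_l.
      replace (dist o x - dist u x - (dist o x - dist v x)) with (- (dist u x - dist v x)) by ring.
      rewrite Rabs_Ropp. apply dist_lip.
    - unfold N2. rewrite dist_self, (dist_sym M y x). ring. }
  assert (Hcase : (dist o x = 0 /\ dist o y = dist x y /\ g x = 0) \/
                  (dist o y = 0 /\ dist o x = dist x y /\ g y = 0) \/
                  (dist o x + dist o y - dist x y <> 0)).
  { pose proof (proj1 Hg) as Hgo.
    destruct (classic (o = x)) as [E|E].
    - left. subst o. rewrite dist_self. auto.
    - destruct (classic (o = y)) as [E'|E'].
      + right; left. subst o. rewrite dist_self, (dist_sym M y x). auto.
      + right; right. intros H. destruct (Hseg o) as [F|F]; auto.
        unfold segment. rewrite (dist_sym M x o). lra. }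
  destruct (solve2 (g x) (g y) (dist x y) (dist o x) (dist o y) HD Hcase) as [lam [mu [E1 E2]]].
  set (k := fun u => 1 * g u + 1 * (fun u => (- lam) * N1 u + (- mu) * N2 u) u).
  assert (Hin : Lip0 o (fun u => (- lam) * N1 u + (- mu) * N2 u)) by (apply Lip0_lin2; auto).
  assert (Hk : Lip0 o k) by (apply Lip0_lin2; auto).
  assert (Hak : a k = 0).
  { apply Hvan; auto.
    - unfold k, N1, N2. rewrite dist_self. lra.
    - unfold k, N1, N2. rewrite dist_self, (dist_sym M y x). lra. }
  unfold k in Hak. rewrite (lin2 M o a _ _ 1 1 Hda Hg Hin) in Hak.
  rewrite (lin2 M o a N1 N2 _ _ Hda HN1 HN2), EN1, EN2 in Hak.
  unfold molecule.
  replace (g x - g y) with ((lam + mu) * dist x y) by lra.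
  field_simplify; lra.
Qed.

Theorem proposition5p1 (M : MetricSpace) (o : M) (x y : M) :
  bounded_metric M -> uniformly_discrete M -> x <> y ->
  (extreme_ball_free o (molecule x y) <->
   (forall z : M, segment x y z <-> (z = x \/ z = y))).
Proof.
  intros HBd [e [He Hud]] Hxy. split.
  - intros [_ Hext] z. split.
    + intros Hs. destruct (classic (z = x)) as [|Hzx]; auto.
      destruct (classic (z = y)) as [|Hzy]; auto. exfalso.
      unfold segment in Hs.
      assert (Hxz : 0 < dist x z) by (apply dist_pos; auto).
      assert (Hzy' : 0 < dist z y) by (apply dist_pos; auto).
      set (t := dist x z / dist x y).
      assert (Ht : 0 < t < 1).
      { unfold t. rewrite <- Hs. split. apply Rdiv_lt_0_compat; lra.
        apply Rmult_lt_reg_r with (dist x z + dist z y); [lra|].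
        unfold Rdiv. rewrite Rmult_assoc, Rinv_l by lra. lra. }
      assert (Hf : feq o (molecule x y) (fcomb t (molecule x z) (molecule z y))).
      { intros f _. unfold fcomb, molecule, t. rewrite <- Hs. field. lra. }
      pose proof (Hext _ _ t (molecule_ball M o x z (fun E => Hzx (eq_sym E)))
                    (molecule_ball M o z y Hzy) Ht Hf) as Hab.
      set (f := fun u => dist u z - dist o z).
      assert (Hf0 : Lip0 o f).
      { split. - unfold f. ring. - exists 1. intros u v. unfold f. rewrite Rmult_1_l.
        replace (dist u z - dist o z - (dist v z - dist o z)) with (dist u z - dist v z) by ring.
        apply dist_lip. }
      specialize (Hab f Hf0). unfold molecule, f in Hab.
      rewrite dist_self, (dist_sym M y z) in Hab.
      replace ((dist x z - dist o z - (0 - dist o z)) / dist x z) with 1 in Hab by (field; lra).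
      replace ((0 - dist o z - (dist z y - dist o z)) / dist z y) with (-1) in Hab by (field; lra).
      lra.
    + intros [-> | ->]; unfold segment; rewrite dist_self; ring.
  - intros Hseg. split; [apply molecule_ball; auto|].
    intros a b t Ha Hb Ht Hm f Hf.
    assert (Hseg' : forall z, segment x y z -> z = x \/ z = y) by (intros z; apply Hseg).
    rewrite (key M o x y e a b t He Hud HBd Hxy Hseg' Ha Hb Ht Hm f Hf).
    symmetry. apply (key M o x y e b a (1 - t) He Hud HBd Hxy Hseg' Hb Ha); auto; [lra|].
    intros g Hg. rewrite (Hm g Hg). unfold fcomb. ring.
Qed.
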